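(* Let $G$ be a finite quasiprimitive permutation group of O'Nan–Scott type $\mathrm{HA}$, $\mathrm{HS}$, $\mathrm{HC}$ or $\mathrm{TW}$, and let $M$ be a point stabilizer. Then $M$ is a perfect code of $G$.
   Context: A permutation group is quasiprimitive if every non-trivial normal subgroup is transitive; the types $\mathrm{HA},\mathrm{HS},\mathrm{HC},\mathrm{TW},\mathrm{SD},\mathrm{CD},\mathrm{AS},\mathrm{PA}$ of quasiprimitive groups are those of Praeger's O'Nan–Scott classification (1997). For a group $G$ with identity $e$ and an inverse-closed subset $S\subseteq G\setminus\{e\}$, the Cayley graph $\mathrm{Cay}(G,S)$ has vertex set $G$ and edges $\{g,sg\}$ for $s\in S$, $g\in G$. A perfect code in a graph is an independent set $C$ of vertices such that every vertex outside $C$ is adjacent to exactly one vertex of $C$. A subgroup $H$ of $G$ is a perfect code of $G$ if some Cayley graph of $G$ admits $H$ as a perfect code. *)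

(* Defs.v *)
From mathcomp Require Import all_boot all_fingroup gseries.
Set Implicit Arguments. Unset Strict Implicit. Unset Printing Implicit Defensive.
Import GroupScope.
Local Open Scope group_scope.

Section PerfectCode.
Variable gT : finGroupType.

(* In Cay(G,S) the edges are {g, s g} (s in S): x ~ y iff y * x^-1 \in S. *)
Definition cay_adj (S : {set gT}) (x y : gT) : bool := y * x^-1 \in S.

Definition is_perfect_code_in (G S C : {set gT}) : Prop :=
  [/\ C \subset G,
      (forall x y, x \in C -> y \in C -> ~~ cay_adj S x y) &
      (forall g, g \in G -> g \notin C ->
         #|[set c in C | cay_adj S g c]| = 1%N)].

Definition perfect_code_of (G H : {group gT}) : Prop :=
  H \subset G /\
  exists S : {set gT},
    [/\ S \subset G :\ 1, (forall s, s \in S -> s^-1 \in S)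
      & is_perfect_code_in G S H].
End PerfectCode.

Section PermGroups.
Variable T : finType.
Implicit Types G N : {group {perm T}}.

Definition minnormal_sub N G : Prop := N <| G /\ minnormal N G.

Definition regular_on N : Prop :=
  [transitive N, on [set: T] | 'P] /\ (forall x : T, 'C_N[x | 'P] = 1).

Definition quasiprimitive G : Prop :=
  forall N : {group {perm T}}, N <| G -> N :!=: 1 ->
    [transitive N, on [set: T] | 'P].

Definition typeHA G : Prop :=
  exists N : {group {perm T}}, minnormal_sub N G /\ abelian N.

(* HS / HC: G has exactly two minimal normal subgroups N1 <> N2, each
   non-abelian and regular; in HS they are simple (N_i = T), in HC they are
   not simple (N_i = T^k, k >= 2). *)
Definition two_regular_minnormal G (P : {group {perm T}} -> Prop) : Prop :=
  exists N1 N2 : {group {perm T}},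
    [/\ N1 :!=: N2, minnormal_sub N1 G, minnormal_sub N2 G,
        (forall N, minnormal_sub N G -> N = N1 \/ N = N2) &
        [/\ ~~ abelian N1 /\ ~~ abelian N2, regular_on N1, regular_on N2,
            P N1 & P N2]].

Definition typeHS G : Prop := two_regular_minnormal G (fun N => simple N).
Definition typeHC G : Prop := two_regular_minnormal G (fun N => ~~ simple N).

(* TW: G has a unique minimal normal subgroup N = T^k with k >= 2 and T
   non-abelian simple (i.e. N non-abelian, not simple), and N is regular. *)
Definition typeTW G : Prop :=
  exists N : {group {perm T}},
    [/\ minnormal_sub N G, (forall K, minnormal_sub K G -> K = N),
        ~~ abelian N, ~~ simple N & regular_on N].
End PermGroups.

(* Main.v *)
Require Import Defs.
From mathcomp Require Import all_boot all_fingroup gseries.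

Set Implicit Arguments. Unset Strict Implicit. Unset Printing Implicit Defensive.
Import GroupScope.

Section Helpers.
Local Open Scope group_scope.

Lemma key_pc (T : finType) (G N : {group {perm T}}) (a : T) :
  N <| G -> [transitive N, on [set: T] | 'P] -> 'C_N[a | 'P] = 1 ->
  perfect_code_of G ('C_G[a | 'P])%G.
Proof.
move=> nNG trN stab1.
have sNG := normal_sub nNG.
have nN := normal_norm nNG.
have triv : forall x, x \in N -> x \in 'C_G[a | 'P] -> x = 1.
  move=> x xN; rewrite inE => /andP[_ xC].
  have : x \in 'C_N[a | 'P] by rewrite inE xN.
  by rewrite stab1 => /set1P.
split; first exact: subsetIl.
exists (N :\ 1); split.
- by apply: setSD.
- by move=> s; rewrite !inE invg_eq1 groupV.
split; first exact: subsetIl.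
- move=> x y xM yM; rewrite /cay_adj !inE; apply/negP => /andP[ne1 yxN].
  have : y * x^-1 \in 'C_G[a | 'P] by rewrite groupM ?groupV.
  move/(triv _ yxN).
  by move/eqP: ne1.
- move=> g gG gM.
  have : a \in orbit 'P N a by rewrite (atransP trN) // inE.
  have : aperm a g \in orbit 'P N a by rewrite (atransP trN) // inE.
  case/orbitP => n nN' ang _.
  set m := g * n^-1.
  have mG : m \in G by rewrite groupM // groupV (subsetP sNG).
  have mM : m \in 'C_G[a | 'P].
    rewrite inE mG; apply/astab1P.
    rewrite /m actM /= !apermE; move: ang => /=; rewrite !apermE => <-; by rewrite permK.
  have -> : [set c in 'C_G[a | 'P] | cay_adj (N :\ 1) g c] = [set m].
    apply/setP => c; rewrite inE [c \in [set m]]inE /cay_adj.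
    apply/idP/idP.
    + case/andP => cM; rewrite !inE => /andP[_ cgN].
      have mNm : m * n * m^-1 \in N.
        have -> : m * n * m^-1 = n ^ m^-1 by rewrite /conjg invgK mulgA.
        by rewrite memJ_norm // groupV (subsetP nN).
      have cm : c * m^-1 \in N.
        have -> : c * m^-1 = (c * g^-1) * (m * n * m^-1).
          by rewrite /m mulgKV !mulgA mulgKV.
        by rewrite groupM.
      have cmM : c * m^-1 \in 'C_G[a | 'P] by rewrite groupM // groupV.
      have := triv _ cm cmM.
      by move/eqP; rewrite mulg_eq1 => /eqP->; rewrite invgK.
    + move/eqP => ->; rewrite mM /=.
      have -> : m * g^-1 = (n^-1) ^ g^-1 by rewrite /m /conjg invgK mulgA.
      rewrite !inE conjg_eq1 memJ_norm ?groupV ?(subsetP nN) // nN' andbT invg_eq1.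
      apply/negP => /eqP n1; move: gM; rewrite -/m.
      have -> : g = m by rewrite /m n1 invg1 mulg1.
      by rewrite mM.
  by rewrite cards1.
Qed.

Lemma abelian_stab (T : finType) (N : {group {perm T}}) (a : T) :
  abelian N -> [transitive N, on [set: T] | 'P] -> 'C_N[a | 'P] = 1.
Proof.
move=> abN trN; apply/eqP; rewrite eqEsubset sub1G andbT.
apply/subsetP => x; rewrite inE => /andP[xN /astab1P xa].
apply/set1P/permP => b; rewrite perm1.
have : b \in orbit 'P N a by rewrite (atransP trN) // inE.
case/orbitP => n nN <-.
have : aperm a (n * x) = aperm a n by rewrite ((centsP abN) _ nN _ xN) actM xa.
by rewrite actM.
Qed.

End Helpers.

Theorem lemma5p2 (T : finType) (G : {group {perm T}}) (a : T) :
  quasiprimitive G ->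
  (typeHA G \/ typeHS G \/ typeHC G \/ typeTW G) ->
  perfect_code_of G ('C_G[a | 'P])%G.
Proof.
move=> qp [[N [[nNG minN] abN]] | [[N1 [N2 [_ [nNG _] _ _ [_ stN _ _ _]]]] | [[N1 [N2 [_ [nNG _] _ _ [_ stN _ _ _]]]] | [N [[nNG _] _ _ _ stN]]]]].
- have ntN : N :!=: 1 by case/mingroupp/andP: minN.
  have trN := qp N nNG ntN.
  exact: key_pc nNG trN (abelian_stab a abN trN).
- by case: stN => trN stN; exact: key_pc nNG trN (stN a).
- by case: stN => trN stN; exact: key_pc nNG trN (stN a).
- by case: stN => trN stN; exact: key_pc nNG trN (stN a).
Qed.
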